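(* In the situation below, for all $g,h\in G$ the matrix $Y(gh)^{-1}Y(g)Y(h)$ lies in $\iota(E^\times\cdot 1_A)$, so there is a unique $\alpha(g,h)\in E^\times$ with $Y(g)Y(h)=Y(gh)\iota(\alpha(g,h)1_A)$. Letting $G$ act on $E$ by $z^g:=z^{\sigma_g}$, the function $\alpha:G\times G\to E^\times$ is a factor set, i.e. $\alpha(gh,k)\alpha(g,h)^k=\alpha(g,hk)\alpha(h,k)$ for all $g,h,k\in G$.
   Context: $p$ prime; $F$ a sufficiently large finite field of characteristic $p$ (residue field of a $p$-modular system), $\mathcal{H}$ a group of automorphisms of the $p$-modular system acting on $F$ and inducing all automorphisms of $F$. $(G,N,\theta)_{\mathcal{H}}$ is a modular $\mathcal{H}$-triple ($N\trianglelefteq G$ finite, $\theta\in\mathrm{IBr}(N)$ with $G$-stable $\mathcal{H}$-orbit), $E=\mathbb{F}_p[\theta]$ the subfield of $F$ generated by the reductions of the values of $\theta$, $m=\theta(1)$, $s=[E:\mathbb{F}_p]$, $X:N\to\mathrm{GL}_m(E)$ a representation affording $\theta$. For $g\in G$, $\sigma_g\in\mathrm{Gal}(E/\mathbb{F}_p)$ is the unique element such that $n\mapsto X(gng^{-1})^{\sigma_g}$ affords $\theta$; $T_g\in\mathrm{GL}_m(E)$ satisfies $X(gng^{-1})^{\sigma_g}=T_gX(n)T_g^{-1}$; $A=\mathrm{M}_m(E)$ is a $G$-algebra via $x^g=T_g^{-1}x^{\sigma_g}T_g$. $\iota:A\to\mathrm{M}_{ms}(\mathbb{F}_p)$ is a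 unitary $\mathbb{F}_p$-algebra embedding and $Y:G\to\mathrm{GL}_{ms}(\mathbb{F}_p)$ satisfies: $Y(g)^{-1}\iota(x)Y(g)=\iota(x^g)$ ($x\in A,g\in G$); $Y(n)=\iota(X(n))$ ($n\in N$); $Y(gn)=Y(g)Y(n)$, $Y(ng)=Y(n)Y(g)$ ($n\in N,g\in G$). *)

(* Defs.v *)
From HB Require Import structures.
From mathcomp Require Import all_boot all_order all_algebra all_fingroup all_solvable all_field all_character.
Set Implicit Arguments. Unset Strict Implicit. Unset Printing Implicit Defensive.
Import GRing.Theory.
Local Open Scope ring_scope.

Definition galg_act (gT : finGroupType) (E : fieldType) (m : nat)
  (sigma : gT -> {rmorphism E -> E}) (T : gT -> 'M[E]_m) (g : gT) (x : 'M[E]_m)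
  : 'M[E]_m :=
  invmx (T g) *m map_mx (sigma g) x *m T g.

(* Main.v *)
Require Import Defs.
From HB Require Import structures.
From mathcomp Require Import all_boot all_order all_algebra all_fingroup all_solvable all_field all_character.
Import GRing.Theory.
Local Open Scope ring_scope.
Lemma central p s m (E : finFieldType) (iota : {rmorphism 'M[E]_m -> 'M['F_p]_(m * s)})
  (Z : 'M['F_p]_(m * s)) :
  prime p -> #|E| = (p ^ s)%N -> (0 < m)%N -> injective iota ->
  (forall x, Z *m iota x = iota x *m Z) -> exists c : E, Z = iota c%:M.
Proof.
move=> pr_p cardE m_gt0 inj_iota cZ.
pose i0 : 'I_m := Ordinal m_gt0.
pose u (i j : 'I_m) := iota (delta_mx i j).
have iM x y : iota (x *m y) = iota x *m iota y by exact: rmorphM.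
have uM i j k l : u i j *m u k l = if j == k then u i l else 0.
  rewrite /u -iM; case: eqP => [<-|/eqP ne]; first by rewrite mul_delta_mx.
  by rewrite mul_delta_mx_0 // raddf0.
have sumu : \sum_i u i i = 1%:M.
  rewrite /u -raddf_sum.
  have -> : \sum_i delta_mx i i = 1%:M :> 'M[E]_m.
    apply/matrixP=> a b; rewrite summxE !mxE (bigD1 a) //= mxE eqxx /=.
    rewrite big1 ?addr0; first by rewrite eq_sym.
    by move=> k nk; rewrite mxE eq_sym (negbTE nk).
  exact: rmorph1.
have sc c x : iota c%:M *m iota x = iota x *m iota c%:M by rewrite -!iM scalar_mxC.
pose P := u i0 i0.
have PP : P *m P = P by rewrite uM eqxx.
pose R := [set v : 'rV['F_p]_(m * s) | v *m P == v].
have P0 : P != 0.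
  apply/eqP; rewrite /P /u -(raddf0 iota) => /inj_iota.
  move/matrixP=> /(_ i0 i0); rewrite !mxE !eqxx /= => /eqP; by rewrite oner_eq0.
have [r r0] : exists r, row r P != 0.
  apply/existsP; apply: contraR P0; rewrite negb_exists => /forallP H.
  by apply/eqP/row_matrixP=> r; rewrite row0; apply/eqP; move: (H r); rewrite negbK.
pose v0 := row r P.
have v0P : v0 *m P = v0 by rewrite /v0 -row_mul PP.
pose S := [set v0 *m iota c%:M | c : E].
have SR : S \subset R.
  apply/subsetP=> v /imsetP[c _ ->]; rewrite inE -mulmxA sc mulmxA v0P //.
have cardS : #|S| = (p ^ s)%N.
  rewrite card_imset // => c d eq_cd; apply/eqP; apply: contraT => ncd.
  have : v0 *m iota (c - d)%:M = 0 by rewrite (raddfB (@scalar_mx _ _)) raddfB mulmxBr eq_cd subrr.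
  move/(congr1 (fun w => w *m iota ((c - d)^-1)%:M)).
  rewrite mul0mx -mulmxA -iM -scalar_mxM mulfV ?subr_eq0 // rmorph1 mulmx1 => v00.
  by move: r0; rewrite -/v0 v00 eqxx.
have cardR : (#|R| <= p ^ s)%N.
  have Hc : #|{: 'M['F_p]_(1, m * s)}| = (p ^ (m * s))%N by rewrite card_mx card_Fp // mul1n.
  rewrite -(@leq_exp2r _ _ m) // -expnM [(s * m)%N]mulnC -Hc.
  rewrite -[m in (_ ^ m)%N]card_ord -card_ffun_on.
  apply: (@leq_card_in _ _ (fun f : {ffun 'I_m -> 'rV['F_p]_(m * s)} => \sum_i f i *m u i0 i)).
  move=> f g /ffun_onP fR /ffun_onP gR eqfg; apply/ffunP => j.
  have key h : (forall i, h i \in R) -> (\sum_i h i *m u i0 i) *m u j i0 = h j.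
    move=> hR; rewrite mulmx_suml (bigD1 j) //= big1 ?addr0.
      by rewrite -mulmxA uM eqxx; have := hR j; rewrite inE => /eqP.
    by move=> i nij; rewrite -mulmxA uM (negbTE nij) mulmx0.
  by rewrite -(key _ fR) -(key _ gR) eqfg.
have SeqR : S = R.
  by apply/eqP; rewrite eqEcard SR cardS.
have v0ZR : v0 *m Z \in R.
  by rewrite inE -mulmxA cZ mulmxA v0P.
rewrite -SeqR in v0ZR; case/imsetP: v0ZR => c _ v0Z.
exists c.
have rowR i : u i i0 *m Z = u i i0 *m iota c%:M.
  apply/row_matrixP=> k; rewrite !row_mul.
  have : row k (u i i0) \in R by rewrite inE -row_mul uM eqxx.
  rewrite -SeqR => /imsetP[d _ ->].
  by rewrite -mulmxA -cZ mulmxA v0Z -!mulmxA sc.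
rewrite -[Z]mul1mx -sumu mulmx_suml -[iota _]mul1mx -sumu mulmx_suml.
apply: eq_bigr => i _.
have -> : u i i = u i i0 *m u i0 i by rewrite uM eqxx.
by rewrite -!mulmxA -cZ !mulmxA rowR -!mulmxA sc.
Qed.
Theorem mainTheorem9
  (p : nat) (E : finFieldType) (s m : nat)
  (gT : finGroupType) (G N : {group gT})
  (X : mx_representation E N m)
  (sigma : gT -> {rmorphism E -> E})
  (T : gT -> 'M[E]_m)
  (iota : {rmorphism 'M[E]_m -> 'M['F_p]_(m * s)})
  (Y : gT -> 'M['F_p]_(m * s)) :
  prime p -> p \in [pchar E] -> #|E| = (p ^ s)%N ->
  (N <| G)%g ->
  mx_absolutely_irreducible X ->
  (* sigma_g, T_g : X(g n g^-1)^{sigma_g} = T_g X(n) T_g^{-1} *)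
  (forall g, g \in G -> T g \in unitmx) ->
  (forall g n, g \in G -> n \in N ->
     map_mx (sigma g) (X (g * n * g^-1)%g) = T g *m X n *m invmx (T g)) ->
  (* sigma_g is the unique such Galois automorphism *)
  (forall g (tau : {rmorphism E -> E}), g \in G ->
     (exists2 U : 'M[E]_m, U \in unitmx &
        forall n, n \in N -> map_mx tau (X (g * n * g^-1)%g) = U *m X n *m invmx U) ->
     tau =1 sigma g) ->
  (* A is a G-algebra via x^g = T_g^{-1} x^{sigma_g} T_g *)
  (forall x, galg_act sigma T 1%g x = x) ->
  (forall g h x, g \in G -> h \in G ->
     galg_act sigma T (g * h)%g x = galg_act sigma T h (galg_act sigma T g x)) ->
  (* iota is a unitary F_p-algebra embedding *)
  injective iota ->
  (* properties of Y *)
  (forall g, g \in G -> Y g \in unitmx) ->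
  (forall g x, g \in G -> invmx (Y g) *m iota x *m Y g = iota (galg_act sigma T g x)) ->
  (forall n, n \in N -> Y n = iota (X n)) ->
  (forall g n, g \in G -> n \in N -> Y (g * n)%g = Y g *m Y n) ->
  (forall g n, g \in G -> n \in N -> Y (n * g)%g = Y n *m Y g) ->
  exists alpha : gT -> gT -> E,
    [/\ (forall g h, g \in G -> h \in G ->
           alpha g h != 0 /\
           invmx (Y (g * h)%g) *m Y g *m Y h = iota ((alpha g h)%:M)),
        (forall g h, g \in G -> h \in G ->
           Y g *m Y h = Y (g * h)%g *m iota ((alpha g h)%:M)),
        (forall g h (a : E), g \in G -> h \in G ->
           Y g *m Y h = Y (g * h)%g *m iota (a%:M) -> a = alpha g h) &
        (forall g h k, g \in G -> h \in G -> k \in G ->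
           alpha (g * h)%g k * sigma k (alpha g h)
           = alpha g (h * k)%g * alpha h k)].
Proof.
move=> pr_p _ cardE _ absX uT _ _ act1 actM inj_iota uY conjY _ _ _.
have m_gt0 : (0 < m)%N by case/andP: absX.
pose act := galg_act sigma T.
have s_gt0 : (0 < s)%N.
  have : (1 < #|E|)%N.
    by apply/card_gt1P; exists 0, 1; rewrite eq_sym oner_eq0.
  by rewrite lt0n; apply: contraL => /eqP s0; rewrite cardE s0 expn0.
have n_gt0 : (0 < m * s)%N by rewrite muln_gt0 m_gt0.
have conj g x : g \in G -> iota x *m Y g = Y g *m iota (act g x).
  move=> gG; rewrite -conjY // -!mulmxA mulKVmx //; exact: uY.
have actK k y : k \in G -> act k (act (k^-1)%g y) = y.
  by move=> kG; rewrite /act -actM ?groupV // mulVg act1.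
have commZ g h : g \in G -> h \in G -> forall y,
    invmx (Y (g * h)%g) *m Y g *m Y h *m iota y = iota y *m (invmx (Y (g * h)%g) *m Y g *m Y h).
  move=> gG hG y; have ghG : (g * h)%g \in G by rewrite groupM.
  rewrite -(actK _ y ghG); set x := act _ y.
  have e1 : invmx (Y (g * h)%g) *m iota x = iota (act (g * h)%g x) *m invmx (Y (g * h)%g).
    by rewrite -[LHS](mulmxK (uY _ ghG)) -(mulmxA (invmx _)) conj // mulKmx // uY.
  rewrite !mulmxA -e1 /act actM // -/act.
  by rewrite -!mulmxA -(conj h) // !mulmxA -(mulmxA (invmx _) (Y g)) -conj // !mulmxA.
pose alpha g h := odflt 0 [pick c : E | invmx (Y (g * h)%g) *m Y g *m Y h == iota c%:M].
have spec g h : g \in G -> h \in G ->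
    invmx (Y (g * h)%g) *m Y g *m Y h = iota (alpha g h)%:M.
  move=> gG hG; rewrite /alpha; case: pickP => [c /eqP //|none].
  have [c Hc] := @central _ _ _ _ _ _ pr_p cardE m_gt0 inj_iota (commZ g h gG hG).
  by move: (none c); rewrite Hc eqxx.
have spec2 g h : g \in G -> h \in G -> Y g *m Y h = Y (g * h)%g *m iota (alpha g h)%:M.
  by move=> gG hG; rewrite -spec // -!mulmxA mulKVmx // uY // groupM.
have scal_inj (a b : E) : iota a%:M = iota b%:M -> a = b.
  move/inj_iota/matrixP => /(_ (Ordinal m_gt0) (Ordinal m_gt0)); rewrite !mxE eqxx /=.
  by rewrite !mulr1n.
have actS k a : k \in G -> act k a%:M = (sigma k a)%:M.
  by move=> kG; rewrite /act /galg_act map_scalar_mx scalar_mxC mulmxKV // uT.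
have iM x y : iota (x *m y) = iota x *m iota y by exact: rmorphM.
exists alpha; split.
- move=> g h gG hG; split; last exact: spec.
  apply/eqP => a0; have := spec g h gG hG; rewrite a0 raddf0 rmorph0 => Z0.
  have : invmx (Y (g * h)%g) *m Y g *m Y h \in unitmx.
    by rewrite !unitmx_mul unitmx_inv !uY ?groupM.
  rewrite Z0 => u0; have := mulmxV u0; rewrite mul0mx => /matrixP.
  move=> /(_ (Ordinal n_gt0) (Ordinal n_gt0)); rewrite !mxE eqxx /= => /eqP.
  by rewrite eq_sym oner_eq0.
- exact: spec2.
- move=> g h a gG hG; rewrite spec2 // => /(congr1 (mulmx (invmx (Y (g * h)%g)))).
  rewrite !mulKmx ?uY ?groupM // => e; exact/esym/scal_inj.
- move=> g h k gG hG kG; apply: scal_inj.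
  have eL : Y g *m Y h *m Y k = Y (g * h * k)%g *m iota (alpha (g * h)%g k * sigma k (alpha g h))%:M.
    rewrite spec2 // -mulmxA conj // mulmxA spec2 ?groupM // actS // -mulmxA.
    by rewrite -iM -scalar_mxM.
  have eR : Y g *m Y h *m Y k = Y (g * h * k)%g *m iota (alpha g (h * k)%g * alpha h k)%:M.
    rewrite -mulmxA spec2 // mulmxA spec2 ?groupM // -mulmxA mulgA.
    by rewrite -iM -scalar_mxM.
  move: (congr1 (mulmx (invmx (Y (g * h * k)%g))) (etrans (esym eL) eR)).
  by rewrite !mulKmx ?uY ?groupM.
Qed.
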